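(* Let $\Gamma=(V,E)$ be a finite graph and let $\phi\in\Phi(\Gamma)$. If $\nvdash_\Gamma\phi$, then there exists a game $G=(V,\{S_v\}_{v\in V},\{u_v\}_{v\in V})$ over the graph $\Gamma$ such that $G\nvDash\phi$.
   Context: Graphs are finite, undirected, with no loops or multiple edges. For $v\in V$, $Adj(v)$ is the set of vertices adjacent to $v$ and $Adj^+(v)=Adj(v)\cup\{v\}$. For $U\subseteq V$ the border is ${\cal B}(U)=\{v\in U\mid (v,w)\in E\text{ for some }w\in V\setminus U\}$. A cut $(U,W)$ of $\Gamma$ is a partition $V=U\sqcup W$. Formulas: $\Phi(\Gamma)$ is the smallest set containing $\bot$, all expressions $A\rhd B$ with $A,B\subseteq V$, and $\phi\rightarrow\psi$ for $\phi,\psi\in\Phi(\Gamma)$ (other connectives, e.g. $\neg$, are the usual abbreviations). $A,B$ denotes $A\cup B$, and a single vertex $v$ stands for $\{v\}$. Proof system: $\vdash_\Gamma\phi$ means $\phi$ is derivable from propositional tautologies of $\Phi(\Gamma)$ and the axioms (1) Reflexivity: $A\rhd B$ whenever $B\subseteq A$; (2) Augmentation: $A\rhd B\rightarrow A,C\rhd B,C$; (3) Transitivity: $A\rhd B\rightarrow(B\rhd C\rightarrow A\rhd C)$; (4) Contiguity: $A,B\rhd C\rightarrow {\cal B}(U),{\cal B}(W),B\rhd C$ for every cut $(U,W)$ of $\Gamma$ with $A\subseteq U$ and $C\subseteq W$; using the rule Modus Ponens. Semantics: a game over $\Gamma$ is a strategic game $G=(V,\{S_v\}_{v\in V},\{u_v\}_{v\in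 V})$ whose set of players is $V$, each strategy set $S_v$ is a finite set, and each pay-off function $u_v$ (real-valued on strategy profiles) depends only on the strategies of the players in $Adj^+(v)$. $NE(G)$ is the set of (pure) Nash equilibria of $G$. For profiles $\mathbf s=\langle s_v\rangle_{v\in V}$, $\mathbf t=\langle t_v\rangle_{v\in V}$ and $X\subseteq V$, $\mathbf s=_X\mathbf t$ means $s_x=t_x$ for all $x\in X$. Truth: $G\nvDash\bot$; $G\vDash A\rhd B$ iff for all $\mathbf s,\mathbf t\in NE(G)$, $\mathbf s=_A\mathbf t$ implies $\mathbf s=_B\mathbf t$; $G\vDash\psi_1\rightarrow\psi_2$ iff $G\nvDash\psi_1$ or $G\vDash\psi_2$. *)

(* Defs.v *)
From mathcomp Require Import all_boot.
From Stdlib Require Import Reals.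
Set Implicit Arguments. Unset Strict Implicit. Unset Printing Implicit Defensive.

Section Defs.
Variable T : finType.

(* Formulas Phi(Gamma): bot, A |> B, and implication. *)
Inductive form : Type :=
| FBot : form
| FRhd : {set T} -> {set T} -> form
| FImp : form -> form -> form.

Fixpoint feval (val : {set T} -> {set T} -> bool) (f : form) : bool :=
  match f with
  | FBot => false
  | FRhd A B => val A B
  | FImp p q => feval val p ==> feval val q
  end.

Definition tautology (f : form) : Prop := forall val, feval val f.

Definition border (e : rel T) (U : {set T}) : {set T} :=
  [set v in U | [exists w, (w \notin U) && e v w]].

(* Derivability |-_Gamma. A cut (U,W) is given by U, with W = ~: U. *)
Inductive gderivable (e : rel T) : form -> Prop :=
| d_taut f : tautology f -> gderivable e f
| d_refl (A B : {set T}) : B \subset A -> gderivable e (FRhd A B)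
| d_aug (A B C : {set T}) : gderivable e (FImp (FRhd A B) (FRhd (A :|: C) (B :|: C)))
| d_trans (A B C : {set T}) :
    gderivable e (FImp (FRhd A B) (FImp (FRhd B C) (FRhd A C)))
| d_contig (U A B C : {set T}) :
    A \subset U -> C \subset ~: U ->
    gderivable e (FImp (FRhd (A :|: B) C)
                      (FRhd (border e U :|: border e (~: U) :|: B) C))
| d_mp f g : gderivable e (FImp f g) -> gderivable e f -> gderivable e g.

Record game : Type := Game {
  gstrat : T -> finType;
  gpayoff : forall v : T, (forall w : T, gstrat w) -> R
}.

Definition game_over (e : rel T) (G : game) : Prop :=
  forall (v : T) (s t : forall w, gstrat G w),
    (forall w, (w == v) || e v w -> s w = t w) ->
    @gpayoff G v s = @gpayoff G v t.

Definition is_NE (G : game) (s : forall w, gstrat G w) : Prop :=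
  forall (v : T) (s' : forall w, gstrat G w),
    (forall w, w != v -> s' w = s w) ->
    (@gpayoff G v s' <= @gpayoff G v s)%R.

Definition eq_on (G : game) (X : {set T}) (s t : forall w, gstrat G w) : Prop :=
  forall x, x \in X -> s x = t x.

Fixpoint sat (G : game) (f : form) : Prop :=
  match f with
  | FBot => False
  | FRhd A B => forall s t : (forall w, gstrat G w), is_NE s -> is_NE t -> eq_on A s t -> eq_on B s t
  | FImp p q => sat G p -> sat G q
  end.

End Defs.

(* Main.v *)
Require Import Defs.
From Stdlib Require Import Reals Lra Classical List.
From mathcomp Require Import all_boot.
Set Implicit Arguments. Unset Strict Implicit. Unset Printing Implicit Defensive.


Section Comp.
Variable T : finType.
Variable e : rel T.
Hypothesis e_sym : forall x y : T, e x y = e y x.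
Hypothesis e_irr : forall x : T, e x x = false.

Definition S3 := (bool * bool * bool)%type.
Definition nb (Y : {set T}) v w := (w \in Y) && ((w == v) || e v w).
Definition diff3 (x y : S3) := [&& ~~ x.1.2, ~~ y.1.2 & x.1.1 != y.1.1].
Definition dis (Y : {set T}) v (n : T -> S3) :=
  [exists w1, exists w2, (nb Y v w1 && nb Y v w2) && diff3 (n w1) (n w2)].
Definition alN v (n : T -> S3) := [exists w, e v w && (n w).2].
Definition okc (Y : {set T}) v (n : T -> S3) :=
  [&& (v \in Y) || ~~ (n v).1.1,
      (n v).1.2 == (v \in Y) && alN v n &
      (n v).2 == dis Y v n].

Lemma okc_local Y v n m : (forall w, (w == v) || e v w -> n w = m w) ->
  okc Y v n = okc Y v m.
Proof.
move=> H.
have Hv : n v = m v by apply: H; rewrite eqxx.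
have Ha : alN v n = alN v m.
  apply: eq_existsb => w; case Hw: (e v w) => //=; by rewrite H // Hw orbT.
have Hd : dis Y v n = dis Y v m.
  apply: eq_existsb => w1; apply: eq_existsb => w2.
  case H1: (nb Y v w1); case H2: (nb Y v w2) => //=.
  move: H1 H2; rewrite /nb => /andP[_ H1] /andP[_ H2]; rewrite !H //.
by rewrite /okc Hv Ha Hd.
Qed.

Definition upd (n : T -> S3) v (x : S3) := fun w => if w == v then x else n w.
Definition cx (Y : {set T}) v n : S3 := let P := (v \in Y) && alN v n in
  (false, P, dis Y v (upd n v (false, P, false))).

Lemma dis_ext Y v n m : (forall w, (n w).1 = (m w).1) -> dis Y v n = dis Y v m.
Proof.
move=> H; apply: eq_existsb => w1; apply: eq_existsb => w2.
by rewrite /diff3 !H.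
Qed.

Lemma okc_total Y v n : okc Y v (upd n v (cx Y v n)).
Proof.
have Ha : alN v (upd n v (cx Y v n)) = alN v n.
  apply: eq_existsb => w; rewrite /upd; case: eqP => [->|_] //.
  by rewrite e_irr.
rewrite /okc Ha {1 2 3}/upd eqxx /= orbT eqxx /=.
apply/eqP; apply: dis_ext => w; rewrite /upd; case: eqP => //.
Qed.

Section NE.
Variable Y : {set T}.
Variable n : T -> S3.
Hypothesis H : forall v, okc Y v n.

Lemma cNE_alarm v : (n v).2 = false.
Proof.
apply/negbTE/negP => Ha.
have := H v; rewrite /okc => /and3P[_ _ /eqP Hd].
move: Hd; rewrite Ha => /esym/existsP[w1 /existsP[w2 /andP[/andP[Hw1 Hw2] Hdf]]].
have Hp : forall w, nb Y v w -> w != v -> (n w).1.2.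
  move=> w /andP[Hy Hvw] Hne.
  have := H w; rewrite /okc => /and3P[_ /eqP -> _].
  rewrite Hy /=; apply/existsP; exists v; rewrite Ha andbT e_sym.
  by move: Hvw; rewrite (negbTE Hne).
move: Hdf; rewrite /diff3 => /and3P[Hp1 Hp2 Hb].
have E1 : w1 = v by apply/eqP; apply: contraNT Hp1 => Hne; apply: Hp.
have E2 : w2 = v by apply/eqP; apply: contraNT Hp2 => Hne; apply: Hp.
by move: Hb; rewrite E1 E2 eqxx.
Qed.

Lemma cNE_pois v : (n v).1.2 = false.
Proof.
have := H v; rewrite /okc => /and3P[_ /eqP -> _].
case: (v \in Y) => //=; apply/negbTE/existsP => -[w /andP[_]].
by rewrite cNE_alarm.
Qed.

Lemma cNE_loc v w1 w2 : nb Y v w1 -> nb Y v w2 -> (n w1).1.1 = (n w2).1.1.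
Proof.
move=> H1 H2; apply/eqP; apply: contraT => Hne.
have := H v; rewrite /okc cNE_alarm => /and3P[_ _ /eqP Hd].
move: Hd => /esym/negbT/existsP; case; exists w1; apply/existsP; exists w2.
by rewrite H1 H2 /diff3 !cNE_pois Hne.
Qed.

Lemma cNE_form v : n v = ((n v).1.1, false, false).
Proof.
move: (cNE_alarm v) (cNE_pois v); case: (n v) => [[a b] c] /= -> -> //.
Qed.

Lemma cNE_out v : v \notin Y -> (n v).1.1 = false.
Proof.
move=> Hv; have := H v; rewrite /okc (negbTE Hv) /= => /andP[Hb _].
exact: negbTE.
Qed.
End NE.

Definition linked (Y : {set T}) := forall f : T -> bool,
  (forall v w1 w2, nb Y v w1 -> nb Y v w2 -> f w1 = f w2) ->
  forall y1 y2, y1 \in Y -> y2 \in Y -> f y1 = f y2.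

Lemma cNE_agree Y n m : (forall v, okc Y v n) -> (forall v, okc Y v m) -> linked Y ->
  forall x, x \in Y -> n x != m x -> forall y, y \in Y -> n y != m y.
Proof.
move=> Hn Hm HY x Hx Hnm y Hy.
have Ln := HY (fun w => (n w).1.1) (cNE_loc Hn) y x Hy Hx.
have Lm := HY (fun w => (m w).1.1) (cNE_loc Hm) y x Hy Hx.
move: Hnm; rewrite (cNE_form Hn x) (cNE_form Hm x) (cNE_form Hn y) (cNE_form Hm y) /= Ln Lm.
done.
Qed.

Definition sig3 (Y : {set T}) (c : bool) w : S3 :=
  if w \in Y then (c,false,false) else (false,false,false).

Lemma sig_NE Y c v : okc Y v (sig3 Y c).
Proof.
have Ha : alN v (sig3 Y c) = false.
  apply/negbTE/existsP => -[w]; rewrite /sig3; case: (w \in Y); by rewrite andbF.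
have Hd : dis Y v (sig3 Y c) = false.
  apply/negbTE/existsP => -[w1 /existsP[w2 /andP[/andP[/andP[H1 _] /andP[H2 _]]]]].
  by rewrite /sig3 H1 H2 /diff3 eqxx !andbF.
rewrite /okc Ha Hd /sig3; case: (v \in Y) => //=.
Qed.

End Comp.


Section Prod.
Variable T : finType.
Variable e : rel T.
Hypothesis e_sym : forall x y : T, e x y = e y x.
Hypothesis e_irr : forall x : T, e x x = false.
Variable P : finType.
Variable Yf : P -> {set T}.

Definition SS : finType := {ffun P -> S3}.
Definition okp v (s : T -> SS) := [forall p, okc e (Yf p) v (fun w => s w p)].
Definition pay (v : T) (s : forall w : T, (fun _ : T => SS) w) : R :=
  if okp v s then R1 else R0.
Definition theG : game T := @Game T (fun _ => SS) pay.

Lemma theG_over : game_over e theG.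
Proof.
move=> v s t H; rewrite /= /pay.
have -> : okp v s = okp v t; last by [].
apply: eq_forallb => p; apply: okc_local => w Hw; by rewrite H.
Qed.

Lemma theG_NE (s : T -> SS) : @is_NE T theG s <-> forall v, okp v s.
Proof.
split.
- move=> Hs v; apply: contraT => Hn.
  pose x : SS := [ffun p => cx e (Yf p) v (fun w => s w p)].
  pose s' := fun w => if w == v then x else s w.
  have Ho : okp v s'.
    apply/forallP => p.
    have -> : (fun w => s' w p) = upd (fun w => s w p) v (cx e (Yf p) v (fun w => s w p)).
      by apply: FunctionalExtensionality.functional_extensionality => w;
         rewrite /s' /upd; case: eqP => // _; rewrite ffunE.
    exact: okc_total.
  have Hd : forall w, w != v -> s' w = s w by move=> w Hw; rewrite /s' (negbTE Hw).
  have := Hs v s' Hd.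
  rewrite /= /pay Ho (negbTE Hn) => Hle; lra.
- move=> Hs v s' _; rewrite /= /pay Hs; case: (okp v s'); lra.
Qed.

End Prod.


Section Val.
Variable T : finType.
Variable e : rel T.
Hypothesis e_sym : forall x y : T, e x y = e y x.
Hypothesis e_irr : forall x : T, e x x = false.
Variable val : {set T} -> {set T} -> bool.
Hypothesis V1 : forall A B : {set T}, B \subset A -> val A B.
Hypothesis V2 : forall A B C : {set T}, val A B -> val (A :|: C) (B :|: C).
Hypothesis V3 : forall A B C : {set T}, val A B -> val B C -> val A C.
Hypothesis V4 : forall U A B C : {set T}, A \subset U -> C \subset ~: U ->
  val (A :|: B) C -> val (border e U :|: border e (~: U) :|: B) C.

Lemma Vunion (A B C : {set T}) : val A B -> val A C -> val A (B :|: C).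
Proof.
move=> HB HC.
have h1 : val A (B :|: A) by have := @V2 A B A HB; rewrite setUid.
have h2 := @V2 A C (B :|: A) HC.
have E : A :|: (B :|: A) = B :|: A.
  by apply/setP => x; rewrite !inE; case: (x \in A); case: (x \in B).
rewrite E in h2.
apply: V3 (V3 h1 h2) _; apply: V1; apply/subsetP => x; rewrite !inE.
by case: (x \in A); case: (x \in B); case: (x \in C).
Qed.

Definition Xof (D : {set T}) := [set v | val D [set v]].

Lemma XofE D v : (v \in Xof D) = val D [set v].
Proof. by rewrite inE. Qed.

Lemma val_seq D (s : seq T) : (forall x, x \in s -> val D [set x]) -> val D [set x in s].
Proof.
elim: s => [|a s IH] H.
  by apply: V1; apply/subsetP => x; rewrite inE.
have -> : [set x in a :: s] = [set a] :|: [set x in s] by apply/setP => x; rewrite !inE.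
apply: Vunion; first by apply: H; rewrite inE eqxx.
by apply: IH => x Hx; apply: H; rewrite inE Hx orbT.
Qed.

Lemma val_X D : val D (Xof D).
Proof.
have -> : Xof D = [set x in enum (Xof D)] by apply/setP => x; rewrite inE mem_enum.
by apply: val_seq => x; rewrite mem_enum inE.
Qed.

Lemma val_single (D E : {set T}) x : val D E -> x \in E -> val D [set x].
Proof. move=> H Hx; apply: V3 H _; apply: V1; by rewrite sub1set. Qed.

Lemma val_subX (D E : {set T}) : E \subset Xof D -> val D E.
Proof. move=> H; apply: V3 (val_X D) _; exact: V1. Qed.

Definition rr (D : {set T}) := [rel x y | e x y && ~~ ((x \in Xof D) && (y \in Xof D))].
Definition Wof (D : {set T}) b := [set v | connect (rr D) b v].

Lemma WofE D b v : (v \in Wof D b) = connect (rr D) b v.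
Proof. by rewrite inE. Qed.

Lemma linked_W D b : b \notin Xof D -> linked e (Wof D b :\: Xof D).
Proof.
move=> Hb f Hloc.
have HbY : b \in Wof D b :\: Xof D by rewrite in_setD WofE connect0 Hb.
pose Q v := forall w, nb e (Wof D b :\: Xof D) v w -> f w = f b.
have Qb : Q b by move=> w Hw; apply: (Hloc b); [exact: Hw | by rewrite /nb HbY eqxx].
have step : forall x y, connect (rr D) b x -> rr D x y -> Q x -> Q y.
  move=> x y Hx Hxy Qx w Hw.
  have Hy : connect (rr D) b y by exact: (connect_trans Hx (@connect1 _ (rr D) _ _ Hxy)).
  move: Hxy => /= /andP[Hexy Hnx].
  case HxY: (x \in Wof D b :\: Xof D).
    rewrite -(Qx x); last by rewrite /nb HxY eqxx.
    apply: (Hloc y); first exact: Hw. by rewrite /nb HxY e_sym Hexy orbT.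
  have HxX : x \in Xof D.
    by move: HxY; rewrite in_setD WofE Hx andbT => /negbFE.
  have HyY : y \in Wof D b :\: Xof D.
    by rewrite in_setD WofE Hy andbT; move: Hnx; rewrite HxX.
  rewrite -(Qx y); last by rewrite /nb HyY Hexy orbT.
  apply: (Hloc y); first exact: Hw. by rewrite /nb HyY eqxx.
have Hall : forall p x, connect (rr D) b x -> Q x -> path (rr D) x p -> Q (last x p).
  elim=> [|y p IH] x Hx Qx //= /andP[Hxy Hp].
  apply: IH Hp; [exact: (connect_trans Hx (@connect1 _ (rr D) _ _ Hxy)) | exact: step Hxy Qx].
have QY : forall y, y \in Wof D b :\: Xof D -> f y = f b.
  move=> y Hy; have := Hy; rewrite in_setD WofE => /andP[_ /connectP[p Hp Ey]].
  apply: (Hall p b (connect0 _ _) Qb Hp); by rewrite /nb -Ey Hy eqxx.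
by move=> y1 y2 H1 H2; rewrite (QY _ H1) (QY _ H2).
Qed.

Lemma closed_W D b x : x \in Wof D b :\: Xof D ->
  ~~ val (~: (Wof D b :\: Xof D)) [set x].
Proof.
rewrite in_setD => /andP[HxX HxW]; apply/negP => Hv.
have Hc : ~: (Wof D b :\: Xof D) = (~: Wof D b) :|: Xof D.
  by apply/setP => v; rewrite in_setC in_setD in_setU in_setC; case: (v \in Wof D b); case: (v \in Xof D).
rewrite Hc in Hv.
have Hs : [set x] \subset ~: ~: Wof D b by rewrite setCK sub1set.
have := V4 (subxx _) Hs Hv.
have Hsub : border e (~: Wof D b) :|: border e (~: ~: Wof D b) :|: Xof D \subset Xof D.
  apply/subsetP => v; rewrite setCK /border !in_setU !in_set.
  case/orP => [/orP[|]|//].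
  - case/andP => HvW /existsP[w /andP[HwW Hvw]].
    rewrite in_setC negbK WofE in HwW.
    rewrite -XofE; apply: contraR HvW => HvX; rewrite ?negbK.
    have Hr : rr D w v by rewrite /rr /= e_sym Hvw (negbTE HvX) andbF.
    exact: (connect_trans HwW (@connect1 _ (rr D) _ _ Hr)).
  - case/andP => HvW /existsP[w /andP[HwW Hvw]].
    rewrite WofE in HwW.
    rewrite -XofE; apply: contraR HwW => HvX; rewrite ?negbK.
    have Hr : rr D v w by rewrite /rr /= Hvw (negbTE HvX).
    exact: (connect_trans HvW (@connect1 _ (rr D) _ _ Hr)).
move=> H; have := V3 (V3 (val_X D) (V1 Hsub)) H.
by rewrite -XofE (negbTE HxX).
Qed.

Definition Yof (p : {set T} * {set T}) : {set T} :=
  if [pick x in p.2 | x \notin Xof p.1] is Some b then Wof p.1 b :\: Xof p.1 else set0.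

Lemma Yof_linked p : linked e (Yof p).
Proof.
rewrite /Yof; case: pickP => [b /andP[_ Hb]|_]; first exact: linked_W.
by move=> f _ y1 y2; rewrite inE.
Qed.

Lemma Yof_closed p x : x \in Yof p -> ~~ val (~: Yof p) [set x].
Proof.
rewrite /Yof; case: pickP => [b /andP[_ Hb]|_]; first exact: closed_W.
by rewrite inE.
Qed.

Lemma Yof_wit (D E : {set T}) : ~~ val D E ->
  exists b, [/\ b \in E, b \in Yof (D, E) & forall d, d \in D -> d \notin Yof (D, E)].
Proof.
move=> Hn; rewrite /Yof /=; case: pickP => [b /andP[HbE Hb]|Hno].
  exists b; split => //; first by rewrite in_setD WofE connect0 Hb.
  move=> d Hd; rewrite in_setD XofE (val_single (V1 (subxx D)) Hd) //.
case/negP: Hn; apply: val_subX; apply/subsetP => x Hx.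
by have := Hno x; rewrite Hx /= => /negbFE.
Qed.

Definition G0 := theG e Yof.

Lemma sat_rhd (D E : {set T}) : sat G0 (FRhd D E) <-> val D E.
Proof.
split.
- move=> Hs; apply: contraT => Hn.
  have [b [HbE HbY HD]] := Yof_wit Hn.
  pose p := (D, E).
  pose s := fun w => [ffun q => sig3 (Yof q) (q == p) w] : {ffun ({set T} * {set T})%type -> S3}.
  pose t := fun w => [ffun q => sig3 (Yof q) false w] : {ffun ({set T} * {set T})%type -> S3}.
  have NEs : is_NE (G:=G0) s.
    apply/(theG_NE e_irr) => v; rewrite /okp; apply/forallP => q.
    have -> : (fun w => s w q) = sig3 (Yof q) (q == p)
      by apply: FunctionalExtensionality.functional_extensionality => w; rewrite ffunE.
    exact: sig_NE.
  have NEt : is_NE (G:=G0) t.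
    apply/(theG_NE e_irr) => v; rewrite /okp; apply/forallP => q.
    have -> : (fun w => t w q) = sig3 (Yof q) false
      by apply: FunctionalExtensionality.functional_extensionality => w; rewrite ffunE.
    exact: sig_NE.
  have Heq : eq_on (G:=G0) D s t.
    move=> d Hd; apply/ffunP => q; rewrite !ffunE /sig3.
    case: eqP => [->|_] //; by rewrite (negbTE (HD d Hd)).
  have := Hs s t NEs NEt Heq b HbE.
  move/(congr1 (fun f : {ffun ({set T} * {set T})%type -> S3} => f p)); rewrite !ffunE /sig3 HbY eqxx.
  by [].
- move=> Hv s t Hs Ht Heq x Hx.
  move/(theG_NE e_irr): Hs => Hs; move/(theG_NE e_irr): Ht => Ht.
  apply/ffunP => q.
  have Hn : forall v, okc e (Yof q) v (fun w => s w q) by move=> v; have := Hs v => /forallP.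
  have Hm : forall v, okc e (Yof q) v (fun w => t w q) by move=> v; have := Ht v => /forallP.
  apply/eqP; apply: contraT => Hne.
  have HxY : x \in Yof q.
    apply: contraT => HxY; case/negP: Hne.
    rewrite (cNE_form e_sym Hn x) (cNE_form e_sym Hm x) (cNE_out Hn HxY) (cNE_out Hm HxY) //.
  have Hagr := cNE_agree e_sym Hn Hm (@Yof_linked q) HxY Hne.
  have HD : D \subset ~: Yof q.
    apply/subsetP => d Hd; rewrite inE; apply/negP => HdY.
    by have := Hagr d HdY; rewrite /= (Heq d Hd) eqxx.
  have := Yof_closed HxY.
  by rewrite (val_single (V3 (V1 HD) Hv) Hx).
Qed.

Lemma sat_feval f : sat G0 f <-> feval val f.
Proof.
elim: f => [|D E|f IHf g IHg] /=.
- by split.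
- exact: sat_rhd.
- split.
  + move=> H; apply/implyP => Hf; apply/IHg; apply: H; exact/IHf.
  + move=> /implyP H Hf; apply/IHg; apply: H; exact/IHf.
Qed.

End Val.


Section Final.
Variable T : finType.
Variable e : rel T.

Definition trivf : form T := FImp (FBot T) (FBot T).
Definition g1 (x : {set T} * {set T}) : form T :=
  if x.2 \subset x.1 then FRhd x.1 x.2 else trivf.
Definition g2 (x : {set T} * {set T} * {set T}) : form T :=
  FImp (FRhd x.1.1 x.1.2) (FRhd (x.1.1 :|: x.2) (x.1.2 :|: x.2)).
Definition g3 (x : {set T} * {set T} * {set T}) : form T :=
  FImp (FRhd x.1.1 x.1.2) (FImp (FRhd x.1.2 x.2) (FRhd x.1.1 x.2)).
Definition g4 (x : {set T} * {set T} * {set T} * {set T}) : form T :=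
  if (x.1.1.2 \subset x.1.1.1) && (x.2 \subset ~: x.1.1.1) then
    FImp (FRhd (x.1.1.2 :|: x.1.2) x.2)
         (FRhd (border e x.1.1.1 :|: border e (~: x.1.1.1) :|: x.1.2) x.2)
  else trivf.

Definition AxL : seq (form T) :=
  map g1 (enum {: {set T} * {set T}}) ++ map g2 (enum {: {set T} * {set T} * {set T}}) ++
  map g3 (enum {: {set T} * {set T} * {set T}}) ++
  map g4 (enum {: {set T} * {set T} * {set T} * {set T}}).

Lemma trivf_d : gderivable e trivf.
Proof. by apply: d_taut => val. Qed.

Lemma AxL_d f : List.In f AxL -> gderivable e f.
Proof.
rewrite /AxL => H.
repeat (apply List.in_app_or in H; destruct H as [H|H]);
  apply List.in_map_iff in H; destruct H as [x [<- _]].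
- rewrite /g1; case: ifP => [H|_]; [exact: d_refl | exact: trivf_d].
- exact: d_aug.
- exact: d_trans.
- rewrite /g4; case: ifP => [/andP[H1 H2]|_]; [exact: d_contig | exact: trivf_d].
Qed.

Lemma chain (L : seq (form T)) phi : (forall f, List.In f L -> gderivable e f) ->
  gderivable e (foldr (@FImp T) phi L) -> gderivable e phi.
Proof.
elim: L => [|a L IH] //= HL Hd.
apply: IH; first by move=> f Hf; apply: HL; right.
apply: d_mp Hd _; apply: HL; by left.
Qed.

Lemma feval_chain val (L : seq (form T)) phi : feval val (foldr (@FImp T) phi L) = false ->
  all (feval val) L /\ feval val phi = false.
Proof.
elim: L => [|a L IH] //= H.
move: H; case: (feval val a) => //= H; by case: (IH H).
Qed.

Lemma in_enumT (U : finType) (x : U) : x \in Finite.enum U.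
Proof. by rewrite -enumT mem_enum. Qed.

End Final.

Theorem theorem1 (T : finType) (e : rel T) (e_sym : forall x y : T, e x y = e y x)
  (e_irr : forall x : T, e x x = false) (phi : form T) :
  ~ gderivable e phi ->
  exists G : game T, game_over e G /\ ~ sat G phi.
Proof.
move=> Hnd.
have Ht : ~ tautology (foldr (@FImp T) phi (AxL e)).
  move=> Ht; apply: Hnd; apply: (chain (L := AxL e)); first exact: AxL_d.
  exact: d_taut.
have [val Hval] := not_all_ex_not _ _ Ht.
have [Hall Hphi] := feval_chain (negbTE (introN idP Hval)).
move: Hall; rewrite /AxL !all_cat !all_map => /and4P[/allP H1 /allP H2 /allP H3 /allP H4].
have V1 : forall A B : {set T}, B \subset A -> val A B.
  move=> A B HB; have := H1 (A, B) (in_enumT _); by rewrite /= /g1 /= HB.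
have V2 : forall A B C : {set T}, val A B -> val (A :|: C) (B :|: C).
  move=> A B C; have := H2 (A, B, C) (in_enumT _); by move=> /= /implyP.
have V3 : forall A B C : {set T}, val A B -> val B C -> val A C.
  move=> A B C Hab Hbc; have := H3 (A, B, C) (in_enumT _); by rewrite /= Hab Hbc.
have V4 : forall U A B C : {set T}, A \subset U -> C \subset ~: U ->
    val (A :|: B) C -> val (border e U :|: border e (~: U) :|: B) C.
  move=> U A B C HA HC; have := H4 (U, A, B, C) (in_enumT _).
  by rewrite /= /g4 /= HA HC /= => /implyP.
exists (G0 e val); split; first exact: theG_over.
move/(sat_feval e_sym e_irr V1 V2 V3 V4); by rewrite Hphi.
Qed.
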